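(* For every $\theta\in[0,1]$, $f(\theta)=l(\theta)$.
   Context: A weighted digraph $D=(V,A,w)$ is a digraph without loops or parallel arcs (opposite arcs allowed) with weights $w:A\to\mathbb{R}_{\ge0}$; $w(D)$ is the total arc weight. For a partition $(X,Y)$ of $V$, $w(X,Y)$ is the total weight of arcs from $X$ to $Y$, and $\mathrm{mac}(D)=\max_{(X,Y)}w(X,Y)$. For $v\in V$, $r(v)=w^+(v)-w^-(v)$ (total weight leaving minus total weight entering $v$); $r^+(D)=\sum_{r(x)>0}r(x)$; $\theta(D)=r^+(D)/w(D)$ for $w(D)>0$. For $\theta\in[0,1]$, $f(\theta)$ is the supremum of all reals $g$ such that $\mathrm{mac}(D)\ge g\cdot w(D)$ for all weighted digraphs $D$ with $w(D)>0$ and $\theta(D)=\theta$. Also $l(\theta)=\frac14+\frac{\theta^2}{4(1-2\theta)}$ if $\theta<1/3$ and $l(\theta)=\theta$ if $\theta\ge1/3$. *)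

(* Defs.v *)
From HB Require Import structures.
From mathcomp Require Import all_boot all_order all_algebra.
From mathcomp Require Import boolp classical_sets reals.
Set Implicit Arguments. Unset Strict Implicit. Unset Printing Implicit Defensive.
Import Order.TTheory GRing.Theory Num.Theory.
Local Open Scope ring_scope.

(* A weighted digraph on the vertex set 'I_n is given by a weight function
   w : 'I_n -> 'I_n -> R; w u v is the weight of the arc u -> v, and weight 0
   means "no arc" (this is harmless: all quantities below are sums of weights).
   No loops, no parallel arcs (a function), opposite arcs allowed. *)
Definition wdigraph (R : realType) (n : nat) (w : 'I_n -> 'I_n -> R) : Prop :=
  (forall u v, 0 <= w u v) /\ (forall v, w v v = 0).

Definition wt (R : realType) (n : nat) (w : 'I_n -> 'I_n -> R) : R :=
  \sum_(u : 'I_n) \sum_(v : 'I_n) w u v.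

Definition cutw (R : realType) (n : nat) (w : 'I_n -> 'I_n -> R)
  (X : {set 'I_n}) : R :=
  \sum_(u in X) \sum_(v in ~: X) w u v.

Definition mac (R : realType) (n : nat) (w : 'I_n -> 'I_n -> R) : R :=
  \big[Num.max/0]_(X : {set 'I_n}) cutw w X.

Definition rdeg (R : realType) (n : nat) (w : 'I_n -> 'I_n -> R) (v : 'I_n) : R :=
  \sum_(u : 'I_n) w v u - \sum_(u : 'I_n) w u v.

Definition rplus (R : realType) (n : nat) (w : 'I_n -> 'I_n -> R) : R :=
  \sum_(v : 'I_n | 0 < rdeg w v) rdeg w v.

Definition theta (R : realType) (n : nat) (w : 'I_n -> 'I_n -> R) : R :=
  rplus w / wt w.

Definition fth (R : realType) (th : R) : R :=
  sup [set g : R | forall (n : nat) (w : 'I_n -> 'I_n -> R),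
         wdigraph w -> 0 < wt w -> theta w = th -> g * wt w <= mac w].

Definition lth (R : realType) (th : R) : R :=
  if th < 3^-1 then 4^-1 + th ^+ 2 / (4 * (1 - 2 * th)) else th.

(* Main.v *)
Require Import Defs.
From HB Require Import structures.
From mathcomp Require Import all_boot all_order all_algebra.
From mathcomp Require Import boolp classical_sets reals.
From mathcomp Require Import ring lra.
Import Order.TTheory GRing.Theory Num.Theory.
Local Open Scope ring_scope.
Set Implicit Arguments. Unset Strict Implicit. Unset Printing Implicit Defensive.
Section Lower.
Variable (R : realType) (n : nat) (w : 'I_n -> 'I_n -> R).
Hypothesis wd : wdigraph w.

Definition Fp (p : 'I_n -> R) : R :=
  \sum_(u : 'I_n) \sum_(v : 'I_n) w u v * (p u * (1 - p v)).

Lemma Fp_split (v0 : 'I_n) (p : 'I_n -> R) :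
  Fp p = (1 - p v0) * Fp (fun u => if u == v0 then 0 else p u)
       + p v0 * Fp (fun u => if u == v0 then 1 else p u).
Proof.
rewrite /Fp !mulr_sumr -big_split; apply: eq_bigr => u _.
rewrite !mulr_sumr -big_split; apply: eq_bigr => v _ /=.
case: (eqVneq u v0) => [->|nu]; case: (eqVneq v v0) => [->|nv].
- by rewrite (proj2 wd); ring.
- ring.
- ring.
- ring.
Qed.

Lemma Fp_set (X : {set 'I_n}) :
  Fp (fun u => (u \in X)%:R) = cutw w X.
Proof.
rewrite /Fp /cutw [RHS]big_mkcond; apply: eq_bigr => u _.
case: (boolP (u \in X)) => uX /=.
  rewrite [RHS]big_mkcond; apply: eq_bigr => v _; rewrite finset.in_setC.
  by case: (v \in X) => /=; ring.
by rewrite big1 // => v _; ring.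
Qed.

Lemma round_k (k : nat) : forall p : 'I_n -> R,
  (forall u, 0 <= p u <= 1) ->
  (forall u : 'I_n, (k <= u)%N -> p u = 0 \/ p u = 1) ->
  exists X, Fp p <= cutw w X.
Proof.
elim: k => [|k IH] p p01 pk.
  exists [set u | p u == 1]; rewrite -Fp_set le_eqVlt; apply/orP; left.
  apply/eqP; congr Fp; apply: funext => u; rewrite inE.
  by case: (pk u (leq0n _)) => ->; rewrite ?eqxx // (_ : (0 == 1 :> R) = false) // eq_sym oner_eq0.
case: (ltnP k n) => kn; last first.
  apply: IH => // u ku; exfalso; move: (ltn_ord u); rewrite ltnNge.
  by rewrite (leq_trans kn ku).
pose v0 := Ordinal kn.
have hp0 : forall b : R, 0 <= b <= 1 -> forall u, 0 <= (if u == v0 then b else p u) <= 1.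
  by move=> b hb u; case: (u == v0).
have hk : forall b : R, b = 0 \/ b = 1 -> forall u : 'I_n, (k <= u)%N ->
   (if u == v0 then b else p u) = 0 \/ (if u == v0 then b else p u) = 1.
  move=> b hb u ku; case: (eqVneq u v0) => // nu; apply: pk.
  rewrite ltn_neqAle ku andbT; apply: contra nu => /eqP e.
  by apply/eqP; apply: val_inj; rewrite /= e.
have h00 : (0 <= (0:R)) && ((0:R) <= 1) by rewrite lexx ler01.
have h11 : (0 <= (1:R)) && ((1:R) <= 1) by rewrite lexx ler01.
have [X0 h0] := IH _ (hp0 0 h00) (hk 0 (or_introl erefl)).
have [X1 h1] := IH _ (hp0 1 h11) (hk 1 (or_intror erefl)).
have a01 := p01 v0; case/andP: a01 => a0 a1.
rewrite (Fp_split v0 p).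
set F0 := Fp _ in h0 *; set F1 := Fp _ in h1 *.
case: (lerP F0 F1) => hF.
  exists X1; nra.
exists X0; nra.
Qed.

Lemma round (p : 'I_n -> R) : (forall u, 0 <= p u <= 1) ->
  exists X, Fp p <= cutw w X.
Proof.
move=> p01; apply: (@round_k n) => // u nu; exfalso.
by move: (ltn_ord u); rewrite ltnNge nu.
Qed.

Definition sgn (u : 'I_n) : R := if 0 < rdeg w u then 1 else -1.

Lemma sum_rdeg : \sum_v rdeg w v = 0.
Proof. by rewrite /rdeg sumrB exchange_big subrr. Qed.

Lemma sum_sgn_rdeg : \sum_v sgn v * rdeg w v = 2 * rplus w.
Proof.
have h := sum_rdeg; rewrite (bigID (fun v => 0 < rdeg w v)) /= in h.
rewrite (bigID (fun v => 0 < rdeg w v)) /=.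
have e1 : \sum_(v | 0 < rdeg w v) sgn v * rdeg w v = \sum_(v | 0 < rdeg w v) rdeg w v.
  by apply: eq_bigr => v hv; rewrite /sgn hv mul1r.
have e2 : \sum_(v | ~~ (0 < rdeg w v)) sgn v * rdeg w v = \sum_(v | ~~ (0 < rdeg w v)) - rdeg w v.
  by apply: eq_bigr => v hv; rewrite /sgn (negbTE hv) mulN1r.
rewrite e1 e2.
rewrite sumrN /rplus; lra.
Qed.

Lemma sum2_lin (a b : R) (x y : 'I_n -> 'I_n -> R) :
  \sum_u \sum_v (a * x u v + b * y u v) =
  a * \sum_u \sum_v x u v + b * \sum_u \sum_v y u v.
Proof.
rewrite !mulr_sumr -big_split; apply: eq_bigr => u _.
by rewrite !mulr_sumr -big_split.
Qed.

Lemma D_eq : \sum_u \sum_v w u v * (sgn u - sgn v) = 2 * rplus w.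
Proof.
have -> : \sum_u \sum_v w u v * (sgn u - sgn v) =
  \sum_u \sum_v w u v * sgn u - \sum_u \sum_v w u v * sgn v.
  rewrite -sumrB; apply: eq_bigr => u _; rewrite -sumrB; apply: eq_bigr => v _; ring.
rewrite [X in _ - X]exchange_big /= -sum_sgn_rdeg /rdeg -sumrB.
apply: eq_bigr => v _; rewrite mulrBr !mulr_sumr; congr (_ - _);
  apply: eq_bigr => u _; ring.
Qed.

Lemma lower_t (th t : R) : rplus w = th * wt w -> 0 <= t -> t <= 1/2 ->
  wt w * (1/4 + t * th - t^+2 * (1 - 2 * th)) <= mac w.
Proof.
move=> hr t0 t1.
pose p u := 1/2 + sgn u * t.
have sg u : sgn u = 1 \/ sgn u = -1 by rewrite /sgn; case: (0 < rdeg w u); [left|right].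
have p01 : forall u, 0 <= p u <= 1.
  by move=> u; rewrite /p; case: (sg u) => ->; apply/andP; split; lra.
have [X hX] := round p01.
have hm : cutw w X <= mac w by rewrite /mac; exact: le_bigmax.
apply: le_trans hm; apply: le_trans hX.
have -> : wt w * (1/4 + t * th - t^+2 * (1 - 2 * th)) =
  \sum_u \sum_v ((1/4 - t^+2) * w u v + (t/2 + t^+2) * (w u v * (sgn u - sgn v))).
  by rewrite sum2_lin D_eq hr -/(wt w); field.
rewrite /Fp; apply: ler_sum => u _; apply: ler_sum => v _.
have w0 := proj1 wd u v.
have wt2 : 0 <= w u v * t^+2 by apply: mulr_ge0 => //; apply: sqr_ge0.
rewrite /p; case: (sg u) => ->; case: (sg v) => ->; nra.
Qed.

Lemma lower_bound (th : R) : 0 <= th -> th <= 1 -> 0 < wt w -> theta w = th ->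
  lth th * wt w <= mac w.
Proof.
move=> th0 th1 wp hth.
have hr : rplus w = th * wt w by rewrite -hth /theta divfK // gt_eqF.
rewrite /lth; case: ifP => hlt.
  have h12 : 0 < 1 - 2 * th by lra.
  have := @lower_t th (th / (2 * (1 - 2 * th))) hr.
  have t0 : 0 <= th / (2 * (1 - 2 * th)) by apply: divr_ge0; lra.
  have t1 : th / (2 * (1 - 2 * th)) <= 1/2.
    rewrite ler_pdivrMr; last lra.
    lra.
  move=> /(_ t0 t1); rewrite mulrC; apply: le_trans; rewrite le_eqVlt; apply/orP; left.
  apply/eqP; congr (_ * _); field; lra.
have h0 : (0:R) <= 1/2 by lra.
have := @lower_t th (1/2) hr h0 (lexx _).
rewrite mulrC; apply: le_trans; rewrite le_eqVlt; apply/orP; left.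
by apply/eqP; congr (_ * _); field.
Qed.
End Lower.
Lemma keyH (R : realType) (th m i j : R) : 0 <= th -> th <= 1 -> 0 <= i -> i <= m -> 0 <= j -> j <= m ->
  (1 - th) / 2 * (i * (m - i) + j * (m - j)) + th * i * (m - j) <= lth th * m ^+ 2.
Proof.
move=> th0 th1 i0 im j0 jm.
set S := i + (m - j); set D := i - (m - j).
have eH : (1 - th) / 2 * (i * (m - i) + j * (m - j)) + th * i * (m - j) =
  (1 - th) * m * S / 2 - (1 - 2 * th) * S ^+ 2 / 4 - D ^+ 2 / 4.
  by rewrite /S /D; field.
rewrite eH /lth; have D2 := sqr_ge0 D.
case: ifP => hlt.
  have h12 : 0 < 1 - 2 * th by lra.
  have e : (4^-1 + th ^+ 2 / (4 * (1 - 2 * th))) * m ^+ 2 -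
     ((1 - th) * m * S / 2 - (1 - 2 * th) * S ^+ 2 / 4 - D ^+ 2 / 4) =
     ((1 - th) * m - (1 - 2 * th) * S) ^+ 2 / (4 * (1 - 2 * th)) + D ^+ 2 / 4.
    by field; rewrite gt_eqF.
  rewrite -subr_ge0 e; apply: addr_ge0; last lra.
  by apply: divr_ge0; [apply: sqr_ge0 | lra].
move/negbT: hlt; rewrite -leNgt => h3.
set T := 2 * m - S.
have T0 : 0 <= T by rewrite /T /S; lra.
have T1 : T <= 2 * m by rewrite /T /S; lra.
have e : th * m ^+ 2 - ((1 - th) * m * S / 2 - (1 - 2 * th) * S ^+ 2 / 4 - D ^+ 2 / 4) =
   m * T * (3 * th - 1) / 2 + (1 - 2 * th) * T ^+ 2 / 4 + D ^+ 2 / 4.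
  by rewrite /T; field.
rewrite -subr_ge0 e.
have mT : 0 <= m * T by apply: mulr_ge0; lra.
have h4 : 0 <= m * T * th by apply: mulr_ge0; lra.
have h5 : 0 <= T * (2 * m - T) by apply: mulr_ge0; lra.
case: (lerP th (1/2)) => h6.
  have : 0 <= (1 - 2 * th) * T ^+ 2 by apply: mulr_ge0; [lra | apply: sqr_ge0].
  have : 0 <= m * T * (3 * th - 1) by apply: mulr_ge0; lra.
  lra.
have : 0 <= (2 * th - 1) * (T * (2 * m - T)) by apply: mulr_ge0; lra.
rewrite expr2; nra.
Qed.

Lemma key_ineq (R : realType) (th m i j : R) : 0 <= th -> th <= 1 -> 1 < m ->
  0 <= i -> i <= m -> 0 <= j -> j <= m ->
  (1 - th) * m * (i * (m - i) + j * (m - j)) + 2 * th * (m - 1) * i * (m - j)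
  <= lth th * (2 * m ^+ 2 * (m - 1)) + m ^+ 2 / 2.
Proof.
move=> th0 th1 m1 i0 im j0 jm.
have H := keyH th0 th1 i0 im j0 jm.
have q : i * (m - i) + j * (m - j) <= m ^+ 2 / 2.
  have : 0 <= (m - 2 * i) ^+ 2 by apply: sqr_ge0.
  have : 0 <= (m - 2 * j) ^+ 2 by apply: sqr_ge0.
  rewrite !expr2; lra.
have q0 : 0 <= i * (m - i) + j * (m - j) by apply: addr_ge0; apply: mulr_ge0; lra.
have e : (1 - th) * m * (i * (m - i) + j * (m - j)) + 2 * th * (m - 1) * i * (m - j) =
  2 * (m - 1) * ((1 - th) / 2 * (i * (m - i) + j * (m - j)) + th * i * (m - j))
  + (1 - th) * (i * (m - i) + j * (m - j)) by field.
rewrite e.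
have h1 : 2 * (m - 1) * ((1 - th) / 2 * (i * (m - i) + j * (m - j)) + th * i * (m - j))
   <= 2 * (m - 1) * (lth th * m ^+ 2) by apply: ler_wpM2l => //; lra.
have h2 : (1 - th) * (i * (m - i) + j * (m - j)) <= (i * (m - i) + j * (m - j)).
  have : 0 <= th * (i * (m - i) + j * (m - j)) by apply: mulr_ge0.
  lra.
have : 2 * (m - 1) * (lth th * m ^+ 2) = lth th * (2 * m ^+ 2 * (m - 1)) by ring.
lra.
Qed.
Section Constr.
Variable (R : realType) (th : R) (m : nat).
Hypothesis th0 : 0 <= th.
Hypothesis th1 : th <= 1.
Hypothesis hm : (2 <= m)%N.

Let N := (m + m)%N.
Definition Pm : {set 'I_N} := [set u : 'I_N | (u < m)%N].
Definition pP (u : 'I_N) : R := (u \in Pm)%:R.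
Definition pN (u : 'I_N) : R := (u \in ~: Pm)%:R.
Definition al : R := (1 - th) * m%:R.
Definition be : R := 2 * th * (m%:R - 1).
Definition wc (u v : 'I_N) : R :=
  if u == v then 0 else al * (pP u * pP v) + al * (pN u * pN v) + be * (pP u * pN v).

Lemma card_Pm : #|Pm| = m.
Proof.
rewrite -sum1_card big_mkcond /= big_split_ord /=.
rewrite (eq_bigr (fun _ => 1%N)); last by move=> i _; rewrite inE /= ltn_ord.
rewrite [X in (_ + X)%N](eq_bigr (fun _ => 0%N)); last first.
  by move=> i _; rewrite inE /= ltnNge leq_addr.
by rewrite [X in (_ + X)%N]big1 // addn0 sum1_card card_ord.
Qed.

Lemma card_Nm : #|~: Pm| = m.
Proof.
have := cardsC Pm; rewrite card_Pm card_ord /N => h.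
by apply/eqP; rewrite -(eqn_add2l m) h.
Qed.

Lemma sum_ind (A B : {set 'I_N}) : \sum_(u in A) (u \in B)%:R = #|A :&: B|%:R :> R.
Proof.
rewrite -sumr_const big_mkcond [RHS]big_mkcond; apply: eq_bigr => u _.
by rewrite finset.in_setI; case: (u \in A); case: (u \in B).
Qed.

Lemma sum_indT (B : {set 'I_N}) : \sum_u (u \in B)%:R = #|B|%:R :> R.
Proof.
have := sum_ind (finset.setT) B; rewrite finset.setTI => <-.
by rewrite [RHS]big_mkcond; apply: eq_bigr => u _; rewrite finset.in_setT.
Qed.

Lemma sum_delta (v : 'I_N) : \sum_u (u == v)%:R = 1 :> R.
Proof.
rewrite (bigD1 v) //= eqxx big1 ?addr0 //.
by move=> u /negbTE ->.
Qed.

Lemma sum_delta' (v : 'I_N) : \sum_u (v == u)%:R = 1 :> R.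
Proof. by rewrite -[RHS](sum_delta v); apply: eq_bigr => u _; rewrite eq_sym. Qed.

Lemma wc_eq u v : wc u v = al * (pP u * pP v) + al * (pN u * pN v) + be * (pP u * pN v)
   - al * (u == v)%:R.
Proof.
rewrite /wc; case: (eqVneq u v) => [->|_]; last by rewrite mulr0 subr0.
rewrite /pP /pN finset.in_setC; case: (v \in Pm) => /=; ring.
Qed.

Lemma sumP : \sum_u pP u = m%:R.
Proof. by rewrite /pP sum_indT card_Pm. Qed.
Lemma sumN : \sum_u pN u = m%:R.
Proof. by rewrite /pN sum_indT card_Nm. Qed.

Lemma sum_lin4 (P : pred 'I_N) (a b c d : R) (x y z t : 'I_N -> R) :
  \sum_(u | P u) (a * x u + b * y u + c * z u - d * t u) =
  a * \sum_(u | P u) x u + b * \sum_(u | P u) y u + c * \sum_(u | P u) z u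
  - d * \sum_(u | P u) t u.
Proof. by rewrite sumrB !big_split /= -!mulr_sumr. Qed.

Lemma row_c u : \sum_v wc u v = al * pP u * m%:R + al * pN u * m%:R + be * pP u * m%:R - al.
Proof.
rewrite (eq_bigr _ (fun v _ => wc_eq u v)) sum_lin4 -!mulr_sumr sumP sumN sum_delta'.
ring.
Qed.

Lemma col_c v : \sum_u wc u v = al * m%:R * pP v + al * m%:R * pN v + be * m%:R * pN v - al.
Proof.
rewrite (eq_bigr _ (fun u _ => wc_eq u v)) sum_lin4.
rewrite -!mulr_suml sumP sumN sum_delta.
ring.
Qed.

Lemma wt_c : wt wc = 2 * m%:R ^+ 2 * (m%:R - 1).
Proof.
rewrite /wt (eq_bigr (fun u => (al * m%:R) * pP u + (al * m%:R) * pN u + (be * m%:R)*pP u - al * 1)); last first.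
  by move=> u _; rewrite row_c; ring.
rewrite sum_lin4 sumP sumN sumr_const card_ord /N /al /be natrD; ring.
Qed.

Lemma rdeg_c v : rdeg wc v = be * m%:R * (pP v - pN v).
Proof.
rewrite /rdeg row_c col_c /pP /pN finset.in_setC; case: (v \in Pm) => /=; ring.
Qed.

Lemma rplus_c : rplus wc = be * m%:R ^+ 2.
Proof.
rewrite /rplus.
have m1 : (1:R) <= m%:R by rewrite ler1n ltnW.
have m10 : (0:R) <= m%:R - 1 by lra.
have bm0 : 0 <= be * m%:R by rewrite /be; have := mulr_ge0 th0 m10; nra.
case: (eqVneq (be * m%:R) 0) => hb.
  rewrite big1; first by rewrite expr2 mulrA hb mul0r.
  by move=> v; rewrite rdeg_c hb mul0r ltxx.
have bp : 0 < be * m%:R by rewrite lt_def hb bm0.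
rewrite (eq_bigl (fun v => v \in Pm)); last first.
  move=> v; rewrite rdeg_c /pP /pN finset.in_setC; case: (v \in Pm) => /=.
    by rewrite subr0 mulr1.
  by rewrite sub0r mulrN1 oppr_gt0 ltNge (ltW bp).
rewrite (eq_bigr (fun _ => be * m%:R)); last first.
  by move=> v hv; rewrite rdeg_c /pP /pN finset.in_setC hv /= subr0 mulr1.
by rewrite sumr_const card_Pm -mulr_natr; ring.
Qed.

Lemma theta_c : theta wc = th.
Proof.
rewrite /theta rplus_c wt_c /be.
have m1 : 1 < m%:R :> R by rewrite ltr1n.
have h1 : m%:R - 1 != 0 :> R by rewrite subr_eq0 gt_eqF.
have h2 : m%:R != 0 :> R by rewrite gt_eqF // (lt_trans ltr01 m1).
by field; rewrite h1 h2.
Qed.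

Lemma wd_c : wdigraph wc.
Proof.
have m1 : (1:R) < m%:R by rewrite ltr1n.
have a0 : 0 <= al by rewrite /al; apply: mulr_ge0; [rewrite subr_ge0 | apply: ler0n].
have b0 : 0 <= be by rewrite /be; apply: mulr_ge0; [apply: mulr_ge0 => // | rewrite subr_ge0 ltW].
have N0 : forall b : bool, (0:R) <= b%:R by move=> b; apply: ler0n.
split; last by move=> v; rewrite /wc eqxx.
move=> u v; rewrite /wc; case: (u == v) => //.
rewrite /pP /pN; case: (u \in Pm); case: (u \in ~: Pm); case: (v \in Pm); case: (v \in ~: Pm) => /=;
  rewrite ?mul0r ?mulr0 ?mul1r ?addr0 ?add0r //; lra.
Qed.

Lemma sum_lin3 (P : pred 'I_N) (a b c : R) (x y z : 'I_N -> R) :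
  \sum_(u | P u) (a * x u + b * y u + c * z u) =
  a * \sum_(u | P u) x u + b * \sum_(u | P u) y u + c * \sum_(u | P u) z u.
Proof. by rewrite !big_split /= -!mulr_sumr. Qed.

Lemma cardC_int (X B : {set 'I_N}) : #|~: X :&: B|%:R = #|B|%:R - #|X :&: B|%:R :> R.
Proof.
have := cardsID X B; rewrite finset.setDE => <-.
by rewrite natrD (finset.setIC B X) (finset.setIC B); ring.
Qed.

Lemma cut_c (X : {set 'I_N}) : cutw wc X =
  al * (#|X :&: Pm|%:R * (m%:R - #|X :&: Pm|%:R) + #|X :&: ~: Pm|%:R * (m%:R - #|X :&: ~: Pm|%:R))
  + be * #|X :&: Pm|%:R * (m%:R - #|X :&: ~: Pm|%:R).
Proof.
rewrite /cutw.
rewrite (eq_bigr (fun u => (al * (m%:R - #|X :&: Pm|%:R)) * pP u + (al * (m%:R - #|X :&: ~: Pm|%:R)) * pN u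
   + (be * (m%:R - #|X :&: ~: Pm|%:R)) * pP u)); last first.
  move=> u uX.
  rewrite (eq_bigr (fun v => al * (pP u * pP v) + al * (pN u * pN v) + be * (pP u * pN v))); last first.
    move=> v vX; rewrite /wc; case: (eqVneq u v) => // e.
    by move: vX; rewrite finset.in_setC -e uX.
  rewrite sum_lin3 -!mulr_sumr /pP /pN !sum_ind !cardC_int card_Pm card_Nm; ring.
rewrite sum_lin3 /pP /pN !sum_ind; ring.
Qed.

Lemma cut_bound (X : {set 'I_N}) : cutw wc X <= lth th * wt wc + m%:R ^+ 2 / 2.
Proof.
rewrite cut_c wt_c /al /be.
have m1 : (1:R) < m%:R by rewrite ltr1n.
have hi : (#|X :&: Pm| <= m)%N by rewrite -card_Pm subset_leq_card // finset.subsetIr.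
have hj : (#|X :&: ~: Pm| <= m)%N by rewrite -card_Nm subset_leq_card // finset.subsetIr.
have li : (#|X :&: Pm|%:R : R) <= m%:R by rewrite ler_nat.
have lj : (#|X :&: ~: Pm|%:R : R) <= m%:R by rewrite ler_nat.
exact: (@key_ineq R th m%:R #|X :&: Pm|%:R #|X :&: ~: Pm|%:R th0 th1 m1 (ler0n _ _) li (ler0n _ _) lj).
Qed.

Lemma mac_c : mac wc <= lth th * wt wc + m%:R ^+ 2 / 2.
Proof.
rewrite /mac; apply: bigmax_le => [|X _]; last exact: cut_bound.
apply: le_trans (cut_bound finset.set0).
rewrite /cutw; apply: sumr_ge0 => u _; apply: sumr_ge0 => v _; exact: (proj1 wd_c).
Qed.

Lemma all_c : [/\ wdigraph wc, wt wc = 2 * m%:R ^+ 2 * (m%:R - 1), theta wc = th &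
   mac wc <= lth th * wt wc + m%:R ^+ 2 / 2].
Proof. by split; [exact: wd_c | exact: wt_c | exact: theta_c | exact: mac_c]. Qed.
End Constr.
Theorem mainTheorem9 (R : realType) (th : R) :
  0 <= th <= 1 -> fth th = lth th.
Proof.
case/andP=> th0 th1.
rewrite /fth; set S := (X in sup X).
have inS : S (lth th) by move=> n w wd wp ht; exact: lower_bound.
have ub : ubound S (lth th).
  move=> g Sg; rewrite leNgt; apply/negP => hg.
  set e := g - lth th.
  have e0 : 0 < e by rewrite /e subr_gt0.
  set x := (4 * e)^-1.
  have x0 : 0 <= x by rewrite /x invr_ge0; lra.
  have hx := truncnS_gt x.
  set k := Num.truncn x in hx.
  have hm : (1 < k.+2)%N by [].
  have [wd ewt eth emac] := all_c th0 th1 hm.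
  have m1 : (1:R) < (k.+2)%:R by rewrite ltr1n.
  have wp : 0 < wt (wc th (m:=k.+2)).
    rewrite ewt; apply: mulr_gt0; [apply: mulr_gt0; [lra|apply: exprn_gt0; lra] | lra].
  have := Sg _ _ wd wp eth.
  move=> /le_trans /(_ emac).
  rewrite ewt.
  have ek : (k.+2)%:R - 1 = (k.+1)%:R :> R by rewrite -natr1 addrK.
  rewrite ek => h.
  have h4 : 4 * e * x = 1 by rewrite /x divff // gt_eqF //; lra.
  have hM : 0 < (k.+2)%:R ^+ 2 :> R by apply: exprn_gt0; lra.
  have : (g - lth th) * (2 * (k.+1)%:R) <= 2^-1.
    have h' : (g - lth th) * (2 * (k.+1)%:R) * (k.+2)%:R ^+ 2 <= 2^-1 * (k.+2)%:R ^+ 2.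
      have : g * (2 * (k.+2)%:R ^+ 2 * (k.+1)%:R) - lth th * (2 * (k.+2)%:R ^+ 2 * (k.+1)%:R)
         <= (k.+2)%:R ^+ 2 / 2 by lra.
      move=> hh.
      have -> : (g - lth th) * (2 * (k.+1)%:R) * (k.+2)%:R ^+ 2 =
        g * (2 * (k.+2)%:R ^+ 2 * (k.+1)%:R) - lth th * (2 * (k.+2)%:R ^+ 2 * (k.+1)%:R) by ring.
      by rewrite [2^-1 * _]mulrC.
    by move: h'; rewrite ler_pM2r.
  rewrite -/e => hh.
  have : e * x < e * (k.+1)%:R by rewrite ltr_pM2l.
  nra.
apply/le_anti/andP; split.
  by apply: ge_sup; [exists (lth th) | exact: ub].
apply: sup_upper_bound => //; split; first by exists (lth th).
by exists (lth th).
Qed.
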